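(* Let $\eta_i\ge0$ with $\sum_i\eta_i<\infty$ and at least one $\eta_i>0$, fix $N>0$, and let $\kappa,\gamma,q_i$ be as in the context. Define $E=\frac{1}{1-\gamma}\sum_iq_i^2\eta_i^2$ (single-task error, $E_A=E_B$ when $N_A=N_B=N$), $E_{ave}=(1-\gamma/2)E$ (error of the averaged model $(f_A+f_B)/2$), and $E_{A\to B}(1)=\frac{1}{(1-\gamma)^2}\sum_iq_i^4\eta_i^2$ (sequential error with $\rho=1$). Then $E_{A\to B}(1)< E_{ave}< E$.
   Context: $\kappa>0$ is the solution of $1=\sum_i\eta_i/(\kappa+N\eta_i)$, $\gamma=\sum_iN\eta_i^2/(\kappa+N\eta_i)^2$ (so $0<\gamma<1$), and $q_i=\kappa/(\kappa+N\eta_i)$. These expressions are the replica-method generalization errors in the noise-free equal-sample-size setting $N_A=N_B=N$ with identical targets. *)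

(* Defs.v *)
From Stdlib Require Import Reals.
From Coquelicot Require Import Coquelicot.
Open Scope R_scope.

Definition qcoef (eta : nat -> R) (N kappa : R) (i : nat) : R :=
  kappa / (kappa + N * eta i).

Definition gammaR (eta : nat -> R) (N kappa : R) : R :=
  Series (fun i => N * (eta i)^2 / (kappa + N * eta i)^2).

Definition E_single (eta : nat -> R) (N kappa : R) : R :=
  / (1 - gammaR eta N kappa) *
  Series (fun i => (qcoef eta N kappa i)^2 * (eta i)^2).

Definition E_ave (eta : nat -> R) (N kappa : R) : R :=
  (1 - gammaR eta N kappa / 2) * E_single eta N kappa.

Definition E_seq1 (eta : nat -> R) (N kappa : R) : R :=
  / (1 - gammaR eta N kappa)^2 *
  Series (fun i => (qcoef eta N kappa i)^4 * (eta i)^2).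

(* Main.v *)
Require Import Defs.
From Stdlib Require Import Reals Lra Lia.
From Coquelicot Require Import Coquelicot.
Open Scope R_scope.
Lemma sum_n_nonneg (a : nat -> R) : (forall n, 0 <= a n) -> forall n, 0 <= sum_n a n.
Proof.
  intros H n; induction n.
  - rewrite sum_O; auto.
  - rewrite sum_Sn. unfold plus; simpl. specialize (H (S n)). lra.
Qed.
Lemma sum_n_ge_term (a : nat -> R) k : (forall n, 0 <= a n) -> forall d, a k <= sum_n a (k + d).
Proof.
  intros H d; induction d.
  - rewrite Nat.add_0_r. destruct k.
    + rewrite sum_O; lra.
    + rewrite sum_Sn. unfold plus; simpl. pose proof (sum_n_nonneg a H k). lra.
  - rewrite Nat.add_succ_r, sum_Sn. unfold plus; simpl. specialize (H (S (k+d))). lra.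
Qed.
Lemma series_pos (a : nat -> R) l k : is_series a l -> (forall n, 0 <= a n) -> 0 < a k -> 0 < l.
Proof.
  intros Hs H Hk.
  assert (Hl : Rbar_le (a k) l).
  { apply (is_lim_seq_le_loc (fun _ => a k) (sum_n a)).
    - exists k. intros n Hn. replace n with (k + (n - k))%nat by lia. apply sum_n_ge_term; auto.
    - apply is_lim_seq_const.
    - exact Hs. }
  simpl in Hl. lra.
Qed.

Theorem proposition3 (eta : nat -> R) (N kappa : R) :
  (forall i, 0 <= eta i) ->
  ex_series eta ->
  (exists i, 0 < eta i) ->
  0 < N ->
  0 < kappa ->
  is_series (fun i => eta i / (kappa + N * eta i)) 1 ->
  E_seq1 eta N kappa < E_ave eta N kappa /\ E_ave eta N kappa < E_single eta N kappa.
Proof.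
  intros Heta _ [k Hk] HN Hkap Hw.
  set (w := fun i => eta i / (kappa + N * eta i)) in *.
  assert (Hden : forall i, 0 < kappa + N * eta i).
  { intro i. specialize (Heta i). nra. }
  assert (Hw0 : forall i, 0 <= w i).
  { intro i. unfold w. apply Rdiv_le_0_compat; auto. }
  assert (Hx1 : forall i, N * w i < 1).
  { intro i. unfold w. specialize (Hden i). specialize (Heta i).
    replace (N * (eta i / (kappa + N * eta i))) with ((N * eta i) / (kappa + N * eta i)) by (field; lra).
    apply (Rmult_lt_reg_r (kappa + N * eta i)); auto.
    unfold Rdiv. rewrite Rmult_assoc, Rinv_l by lra. lra. }
  assert (Hwk : 0 < w k).
  { unfold w. apply Rdiv_lt_0_compat; auto. }
  set (G := fun i => N * w i ^ 2).
  set (F := fun i => N * w i ^ 2 * (1 - N * w i) ^ 2).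
  assert (HG0 : forall i, 0 <= G i).
  { intro i; unfold G. specialize (Hw0 i). nra. }
  assert (HF0 : forall i, 0 <= F i).
  { intro i; unfold F. specialize (Hw0 i). apply Rmult_le_pos; [nra|]. apply pow2_ge_0. }
  assert (exW : ex_series w) by (exists 1; exact Hw).
  assert (exG : ex_series G).
  { apply (ex_series_le G w); auto. intro n. change norm with Rabs. simpl.
    rewrite Rabs_pos_eq; auto. unfold G. specialize (Hw0 n); specialize (Hx1 n). nra. }
  assert (exF : ex_series F).
  { apply (ex_series_le F G); auto. intro n. change norm with Rabs. simpl.
    rewrite Rabs_pos_eq; auto. unfold F, G. specialize (Hw0 n); specialize (Hx1 n).
    assert (0 <= N * w n ^ 2) by nra.
    assert (0 <= N * w n) by nra.
    assert ((1 - N * w n)^2 <= 1) by (simpl; nra).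
    rewrite <- (Rmult_1_r (N * w n ^ 2)) at 2. apply Rmult_le_compat_l; auto. }
  set (m := Series G). set (SF := Series F).
  assert (Hgam : gammaR eta N kappa = m).
  { unfold gammaR, m. apply Series_ext. intro n. unfold G, w.
    specialize (Hden n). field. lra. }
  assert (HS2 : Series (fun i => qcoef eta N kappa i ^ 2 * eta i ^ 2) = kappa^2 / N * m).
  { unfold m. rewrite <- Series_scal_l. apply Series_ext. intro n.
    unfold G, w, qcoef. specialize (Hden n). field. lra. }
  assert (HS4 : Series (fun i => qcoef eta N kappa i ^ 4 * eta i ^ 2) = kappa^2 / N * SF).
  { unfold SF. rewrite <- Series_scal_l. apply Series_ext. intro n.
    unfold F, w, qcoef. specialize (Hden n). field. lra. }
  assert (HGs : is_series G m) by (apply Series_correct; auto).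
  assert (HFs : is_series F SF) by (apply Series_correct; auto).
  assert (Hm0 : 0 < m).
  { apply (series_pos G m k); auto. unfold G. apply Rmult_lt_0_compat; auto. apply pow_lt; auto. }
  assert (Hm1 : m < 1).
  { assert (H1 : is_series (fun n => w n - G n) (1 - m)).
    { pose proof (is_series_minus _ _ _ _ Hw HGs) as H. exact H. }
    assert (0 < 1 - m); [|lra].
    apply (series_pos _ _ k H1).
    - intro n. unfold G. specialize (Hw0 n); specialize (Hx1 n). simpl. nra.
    - unfold G. specialize (Hx1 k). simpl. nra. }
  set (hm := 3/2 * m^2 - 1/2 * m^3).
  set (hp := 3 * m - 3/2 * m^2).
  assert (HD : is_series (fun n => (1 - hp) * G n + (hp * m - hm) * w n - F n)
                 ((1 - hp) * m + (hp * m - hm) * 1 - SF)).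
  { pose proof (is_series_scal_l (1 - hp) _ _ HGs) as H1.
    pose proof (is_series_scal_l (hp * m - hm) _ _ Hw) as H2.
    pose proof (is_series_plus _ _ _ _ H1 H2) as H3.
    pose proof (is_series_minus _ _ _ _ H3 HFs) as H4. exact H4. }
  assert (Hpt : forall n, (1 - hp) * G n + (hp * m - hm) * w n - F n =
     w n * ((N * w n - m)^2 * (3/2 - 1/2 * (N * w n) - m) + 1/2 * (N * w n)^2 * (1 - N * w n))).
  { intro n. unfold G, F, hp, hm. field. }
  assert (HDpos : 0 < (1 - hp) * m + (hp * m - hm) * 1 - SF).
  { apply (series_pos _ _ k HD).
    - intro n. rewrite Hpt. specialize (Hw0 n); specialize (Hx1 n).
      apply Rmult_le_pos; auto.
      assert (0 <= N * w n) by nra.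
      apply Rplus_le_le_0_compat.
      + apply Rmult_le_pos; [apply pow2_ge_0 | lra].
      + apply Rmult_le_pos; [|lra]. apply Rmult_le_pos; [lra|apply pow2_ge_0].
    - rewrite Hpt. specialize (Hx1 k). apply Rmult_lt_0_compat; auto.
      assert (0 < N * w k) by (apply Rmult_lt_0_compat; auto).
      assert (0 <= (N * w k - m)^2 * (3/2 - 1/2 * (N * w k) - m)).
      { apply Rmult_le_pos; [apply pow2_ge_0 | lra]. }
      assert (0 < 1/2 * (N * w k)^2 * (1 - N * w k)).
      { apply Rmult_lt_0_compat; [|lra]. apply Rmult_lt_0_compat; [lra|apply pow_lt; auto]. }
      lra. }
  assert (HSF : SF < m * (1 - m) * (1 - m / 2)).
  { unfold hp, hm in HDpos. nra. }
  unfold E_seq1, E_ave, E_single. rewrite Hgam, HS2, HS4.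
  assert (HA : 0 < kappa^2 / N) by (apply Rdiv_lt_0_compat; nra).
  split.
  - apply Rlt_0_minus.
    replace ((1 - m / 2) * (/ (1 - m) * (kappa ^ 2 / N * m)) - / (1 - m) ^ 2 * (kappa ^ 2 / N * SF))
      with (kappa^2 / N / (1 - m)^2 * (m * (1 - m) * (1 - m / 2) - SF)) by (field; lra).
    apply Rmult_lt_0_compat; [|lra].
    apply Rdiv_lt_0_compat; auto. nra.
  - apply Rlt_0_minus.
    replace (/ (1 - m) * (kappa ^ 2 / N * m) - (1 - m / 2) * (/ (1 - m) * (kappa ^ 2 / N * m)))
      with (kappa^2 / N / (1 - m) * (m * m / 2)) by (field; lra).
    apply Rmult_lt_0_compat; [|nra].
    apply Rdiv_lt_0_compat; auto. lra.
Qed.
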